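(* Let $X$ be a Tychonoff space which is a finite union $X=X_1\cup\dots\cup X_k$ of closed subsets $X_i$, each of which is a $\Delta$-space. Then $X$ is a $\Delta$-space. In particular, a finite union of compact $\Delta$-subspaces of a Hausdorff space is a $\Delta$-space.
   Context: A topological space $X$ is a $\Delta$-space if for every decreasing sequence $\{D_n:n\in\omega\}$ of subsets of $X$ with $\bigcap_n D_n=\emptyset$ there is a decreasing sequence $\{V_n:n\in\omega\}$ of open subsets of $X$ with $D_n\subseteq V_n$ for all $n$ and $\bigcap_n V_n=\emptyset$. *)

(* Defs.v *)
From HB Require Import structures.
From mathcomp Require Import all_boot all_order all_algebra.
From mathcomp Require Import all_classical all_reals all_analysis.
Set Implicit Arguments. Unset Strict Implicit. Unset Printing Implicit Defensive.
Local Open Scope classical_set_scope.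

Definition decreasing_sets {T : Type} (D : nat -> set T) : Prop :=
  forall n, D n.+1 `<=` D n.

Definition tychonoff_space (T : topologicalType) : Prop :=
  completely_regular_space T /\ accessible_space T.

Definition delta_space (T : topologicalType) : Prop :=
  forall D : nat -> set T, decreasing_sets D -> \bigcap_n D n = set0 ->
    exists V : nat -> set T,
      [/\ forall n, open (V n), decreasing_sets V,
          forall n, D n `<=` V n & \bigcap_n V n = set0].

(* The subset A of T, with the subspace topology, is a Delta-space:
   the definition of delta_space with "open in A" unfolded as
   "of the form A `&` U with U open in T". *)
Definition delta_subspace (T : topologicalType) (A : set T) : Prop :=
  forall D : nat -> set T, (forall n, D n `<=` A) ->
    decreasing_sets D -> \bigcap_n D n = set0 ->
    exists V : nat -> set T,
      [/\ forall n, exists U, open U /\ V n = A `&` U, decreasing_sets V,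
          forall n, D n `<=` V n & \bigcap_n V n = set0].

(* Main.v *)
Require Import Defs.
From mathcomp Require Import all_boot all_order all_algebra.
From mathcomp Require Import all_classical all_reals all_analysis.
Local Open Scope classical_set_scope.

Lemma open_finI (T : topologicalType) (I : finType) (F : I -> set T) :
  (forall i, open (F i)) -> open [set x | forall i, F i x].
Proof.
move=> oF; rewrite openE => x Fx.
exact: (@filter_forall T I (fun i => F i) (nbhs x) _
   (fun i => open_nbhs_nbhs (conj (oF i) (Fx i)))).
Qed.

Lemma key (T : topologicalType) (k : nat) (X : 'I_k -> set T) :
  (forall i, closed (X i)) -> (forall i, delta_subspace (X i)) ->
  forall D : nat -> set T, decreasing_sets D -> \bigcap_n D n = set0 ->
  exists W : nat -> set T,
    [/\ forall n, open (W n), decreasing_sets W, forall n, D n `<=` W n &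
        forall x i, X i x -> ~ (forall n, W n x)].
Proof.
move=> cX dX D dD D0.
have H : forall i, exists V : nat -> set T,
   [/\ forall n, exists U, open U /\ V n = X i `&` U, decreasing_sets V,
          forall n, D n `&` X i `<=` V n & \bigcap_n V n = set0].
  move=> i; apply: (dX i (fun n => D n `&` X i)).
  - by move=> n x [_ ?].
  - by move=> n x [Dx Xx]; split => //; apply: dD.
  - apply/seteqP; split => // x /= Hx.
    have : (\bigcap_n D n) x by move=> n _; case: (Hx n I).
    by rewrite D0.
have [V HV] := choice H.
exists (fun n => [set x | forall i, V i n x \/ ~ X i x]); split.
- move=> n.
  have -> : [set x | forall i, V i n x \/ ~ X i x] =
            [set x | forall i, (V i n `|` ~` X i) x] by [].
  apply: open_finI => i.
  have [oV _ _ _] := HV i; have [U [oU ->]] := oV n.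
  have -> : X i `&` U `|` ~` X i = U `|` ~` X i.
    apply/seteqP; split => x /=.
    - by case=> [[_ Ux]|nX]; [left|right].
    - case: (pselect (X i x)) => Xx; last by right.
      by case=> [Ux|nX]; [left|right].
  by apply: openU => //; rewrite openC.
- move=> n x /= Hx i; case: (Hx i) => [Vx|]; [left|by right].
  by have [_ dV _ _] := HV i; apply: dV.
- move=> n x Dx i; case: (pselect (X i x)) => Xx; [left|by right].
  by have [_ _ sV _] := HV i; apply: sV.
- move=> x i Xx Wx.
  have [_ _ _ V0] := HV i.
  have : (\bigcap_n V i n) x.
    by move=> n _; case: (Wx n i).
  by rewrite V0.
Qed.

Theorem proposition5p4 :
  (forall (T : topologicalType) (k : nat) (X : 'I_k -> set T),
      tychonoff_space T ->
      (forall i, closed (X i)) ->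
      (forall i, delta_subspace (X i)) ->
      \bigcup_i X i = setT ->
      delta_space T)
  /\
  (forall (T : topologicalType) (k : nat) (X : 'I_k -> set T),
      hausdorff_space T ->
      (forall i, compact (X i)) ->
      (forall i, delta_subspace (X i)) ->
      delta_subspace (\bigcup_i X i)).
Proof.
split.
- move=> T k X _ cX dX cov D dD D0.
  have [W [oW dW sW eW]] := @key _ _ X cX dX D dD D0.
  exists W; split => //.
  apply/seteqP; split => // x Wx.
  have : (\bigcup_i X i) x by rewrite cov.
  case=> i _ Xx; exfalso; apply: (eW x i Xx) => n; exact: Wx.
- move=> T k X hT cX dX D sD dD D0.
  have cX' : forall i, closed (X i) by move=> i; exact: compact_closed hT (cX i).
  have [W [oW dW sW eW]] := @key _ _ X cX' dX D dD D0.
  exists (fun n => (\bigcup_i X i) `&` W n); split.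
  + by move=> n; exists (W n).
  + by move=> n x [Ax Wx]; split => //; apply: dW.
  + move=> n x Dx; have h1 := sD n x Dx; have h2 := sW n x Dx.
    exact: (conj h1 h2).
  + apply/seteqP; split => // x Wx.
    have [Ax _] := Wx 0 I.
    case: Ax => i _ Xx; exfalso; apply: (eW x i Xx) => n; by case: (Wx n I).
Qed.
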